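(* Let $h_1,\dots,h_{m_1},g_1,\dots,g_{m_2}\in\mathbb{R}[X]$ with every $\deg g_j$ even, and let $U=\{x\in\mathbb{R}^n:h_i(x)=0\ (i=1,\dots,m_1),\ g_j(x)\ge0\ (j=1,\dots,m_2)\}$. Define $\tilde U^{o}=\{\tilde x=(x_0,x)\in\mathbb{R}^{n+1}:\tilde h_i(\tilde x)=0,\ \tilde g_j(\tilde x)\ge0,\ x_0>0\}$ and $\tilde U^{c}$ the same set with $x_0\ge0$ in place of $x_0>0$. Suppose $U$ is not compact. If $\mathrm{conv}(\overline{\tilde U^{o}})$ is closed and pointed, then $U$ is not closed at $\infty$, i.e. $\overline{\tilde U^{o}}\neq\tilde U^{c}$.
   Context: $X=(X_1,\dots,X_n)$, $\tilde X=(X_0,X)$. For $f\in\mathbb{R}[X]$ of degree $d$, its homogenization is $\tilde f(\tilde X)=X_0^df(X/X_0)$. A closed convex cone $K$ is pointed if $K\cap(-K)=\{0\}$. $U$ is closed at $\infty$ if $\overline{\tilde U^{o}}=\tilde U^{c}$. Overline denotes closure, $\mathrm{conv}$ convex hull. *)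

(* Defs.v *)
From Stdlib Require Import Reals Lra List Arith.
Import ListNotations.
Open Scope R_scope.

(* Points of R^n are functions nat -> R; only coordinates i < n matter.
   All topological notions below only look at coordinates i < n. *)
Definition vec := nat -> R.

Definition sumR (n : nat) (f : nat -> R) : R :=
  fold_right Rplus 0 (map f (seq 0 n)).

Definition sumN (n : nat) (f : nat -> nat) : nat :=
  fold_right Nat.add 0%nat (map f (seq 0 n)).

Definition prodR (n : nat) (f : nat -> R) : R :=
  fold_right Rmult 1 (map f (seq 0 n)).

(* exponent vectors are lists of naturals of length n; coefficients are given
   by a function, with a duplicate-free finite list containing the support. *)
Record mpoly (n : nat) := MPoly {
  mcoef : list nat -> R;
  msupp : list (list nat);
  msupp_nodup : NoDup msupp;
  msupp_len : forall a, In a msupp -> length a = n;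
  msupp_cover : forall a, mcoef a <> 0 -> In a msupp
}.
Arguments mcoef {n}.
Arguments msupp {n}.

Definition expo (n : nat) (a : list nat) (i : nat) : nat := nth i a 0%nat.

Definition mdeg_mono (n : nat) (a : list nat) : nat := sumN n (expo n a).

Definition mono_eval (n : nat) (a : list nat) (x : vec) : R :=
  prodR n (fun i => x i ^ expo n a i).

Definition peval {n} (f : mpoly n) (x : vec) : R :=
  fold_right Rplus 0 (map (fun a => mcoef f a * mono_eval n a x) (msupp f)).

(* total degree (degree of the zero polynomial is 0 by convention) *)
Definition pdeg {n} (f : mpoly n) : nat :=
  fold_right Nat.max 0%nat
    (map (fun a => if Req_EM_T (mcoef f a) 0 then 0%nat else mdeg_mono n a)
         (msupp f)).

(* homogenization evaluated at xt = (x0, x) in R^{n+1}, where xt 0 = x0 and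
   xt (S i) = x_{i+1}:  ~f(xt) = x0^d f(x/x0) = sum_a c_a x0^(d-|a|) x^a *)
Definition hom_eval {n} (f : mpoly n) (xt : vec) : R :=
  fold_right Rplus 0
    (map (fun a => mcoef f a * xt 0%nat ^ (pdeg f - mdeg_mono n a)
                   * mono_eval n a (fun i => xt (S i)))
         (msupp f)).

Definition dist (n : nat) (x y : vec) : R :=
  sqrt (sumR n (fun i => (x i - y i) ^ 2)).

Definition closure (n : nat) (S : vec -> Prop) : vec -> Prop :=
  fun x => forall eps, 0 < eps -> exists y, S y /\ dist n x y < eps.

Definition is_closed (n : nat) (S : vec -> Prop) : Prop :=
  forall x, closure n S x -> S x.

Definition is_open (n : nat) (O : vec -> Prop) : Prop :=
  forall x, O x -> exists eps, 0 < eps /\ forall y, dist n x y < eps -> O y.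

Definition is_compact (n : nat) (S : vec -> Prop) : Prop :=
  forall (I : Type) (O : I -> vec -> Prop),
    (forall i, is_open n (O i)) ->
    (forall x, S x -> exists i, O i x) ->
    exists l : list I, forall x, S x -> exists i, In i l /\ O i x.

Definition conv (n : nat) (S : vec -> Prop) : vec -> Prop :=
  fun x => exists l : list (R * vec),
    Forall (fun p => 0 <= fst p /\ S (snd p)) l /\
    fold_right Rplus 0 (map fst l) = 1 /\
    forall i, (i < n)%nat ->
      x i = fold_right Rplus 0 (map (fun p => fst p * snd p i) l).

Definition pointed (n : nat) (K : vec -> Prop) : Prop :=
  forall x, K x -> K (fun i => - x i) -> forall i, (i < n)%nat -> x i = 0.

Definition Uset (n m1 m2 : nat) (h g : nat -> mpoly n) : vec -> Prop :=
  fun x => (forall i, (i < m1)%nat -> peval (h i) x = 0) /\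
           (forall j, (j < m2)%nat -> 0 <= peval (g j) x).

Definition Uo (n m1 m2 : nat) (h g : nat -> mpoly n) : vec -> Prop :=
  fun xt => (forall i, (i < m1)%nat -> hom_eval (h i) xt = 0) /\
            (forall j, (j < m2)%nat -> 0 <= hom_eval (g j) xt) /\
            0 < xt 0%nat.

Definition Uc (n m1 m2 : nat) (h g : nat -> mpoly n) : vec -> Prop :=
  fun xt => (forall i, (i < m1)%nat -> hom_eval (h i) xt = 0) /\
            (forall j, (j < m2)%nat -> 0 <= hom_eval (g j) xt) /\
            0 <= xt 0%nat.

Definition closed_at_inf (n m1 m2 : nat) (h g : nat -> mpoly n) : Prop :=
  forall xt, closure (S n) (Uo n m1 m2 h g) xt <-> Uc n m1 m2 h g xt.

(* Main.v *)
Require Import Defs.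
From Stdlib Require Import Reals Lra List Arith.
From Stdlib Require Import Lia ClassicalEpsilon Classical FunctionalExtensionality ZArith.
Open Scope R_scope.

Lemma nat_unb (r : R) : exists N : nat, r < INR N.
Proof.
  destruct (archimed r) as [H1 _].
  destruct (Z_le_gt_dec (up r) 0) as [Hz|Hz].
  - exists 1%nat. apply IZR_le in Hz. simpl. lra.
  - exists (Z.to_nat (up r)). rewrite INR_IZR_INZ, Z2Nat.id by lia. lra.
Qed.

Definition lsum (l : list nat) (f : nat -> R) := fold_right Rplus 0 (map f l).

Lemma lsum_le l f g : (forall i, In i l -> f i <= g i) -> lsum l f <= lsum l g.
Proof. unfold lsum; induction l; simpl; intros H. lra.
  assert (f a <= g a) by (apply H; auto). assert (fold_right Rplus 0 (map f l) <= fold_right Rplus 0 (map g l)) by (apply IHl; auto). lra. Qed.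

Lemma lsum_plus l f g : lsum l (fun i => f i + g i) = lsum l f + lsum l g.
Proof. induction l; unfold lsum in *; simpl. lra. rewrite IHl. lra. Qed.

Lemma lsum_scal l f c : lsum l (fun i => c * f i) = c * lsum l f.
Proof. induction l; unfold lsum in *; simpl. lra. rewrite IHl. lra. Qed.

Lemma lsum_const_le l f c : (forall i, In i l -> f i <= c) -> lsum l f <= INR (length l) * c.
Proof. unfold lsum in *; induction l; cbn -[INR]; intros H. simpl; lra.
  assert (f a <= c) by auto. assert (fold_right Rplus 0 (map f l) <= INR (length l) * c) by (apply IHl; auto).
  rewrite S_INR. lra. Qed.

Lemma lsum_nonneg l f : (forall i, In i l -> 0 <= f i) -> 0 <= lsum l f.
Proof. unfold lsum; induction l; simpl; intros H. lra.
  assert (0 <= f a) by auto. assert (0 <= fold_right Rplus 0 (map f l)) by (apply IHl; auto). lra. Qed.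

Lemma lsum_elem l f j : (forall i, In i l -> 0 <= f i) -> In j l -> f j <= lsum l f.
Proof. unfold lsum in *; induction l; simpl; intros H Hj. contradiction.
  destruct Hj as [<-|Hj].
  - assert (0 <= fold_right Rplus 0 (map f l)) by (apply lsum_nonneg; auto). lra.
  - assert (f j <= fold_right Rplus 0 (map f l)) by (apply IHl; auto). assert (0 <= f a) by auto. lra. Qed.

Lemma sumR_l n f : sumR n f = lsum (seq 0 n) f.
Proof. reflexivity. Qed.

Lemma sumR_S n f : sumR (S n) f = f 0%nat + sumR n (fun j => f (S j)).
Proof. unfold sumR. simpl. rewrite <- seq_shift, map_map. reflexivity. Qed.

Lemma in_seq0 n i : In i (seq 0 n) <-> (i < n)%nat.
Proof. rewrite in_seq. lia. Qed.

Lemma sqrt_sum_le l (a : nat -> R) :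
  sqrt (lsum l (fun i => a i ^ 2)) <= lsum l (fun i => Rabs (a i)).
Proof.
  assert (Hn : 0 <= lsum l (fun i => Rabs (a i))) by (apply lsum_nonneg; intros; apply Rabs_pos).
  assert (H : lsum l (fun i => a i ^ 2) <= lsum l (fun i => Rabs (a i)) ^ 2).
  { clear Hn. induction l; unfold lsum in *; cbn [map fold_right]. lra.
    assert (0 <= fold_right Rplus 0 (map (fun i => Rabs (a i)) l)) by (apply lsum_nonneg; intros; apply Rabs_pos).
    assert (a a0 ^ 2 = Rabs (a a0) * Rabs (a a0)).
    { rewrite <- Rabs_mult. rewrite Rabs_pos_eq. ring. nra. }
    pose proof (Rabs_pos (a a0)).
    set (T := fold_right Rplus 0 (map (fun i => Rabs (a i)) l)) in *.
    set (S0 := fold_right Rplus 0 (map (fun i => a i ^ 2) l)) in *.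
    set (u := Rabs (a a0)) in *.
    assert (0 <= u * T) by (apply Rmult_le_pos; auto).
    replace ((u + T) ^ 2) with (u*u + 2*(u*T) + T^2) by ring. lra. }
  rewrite <- (sqrt_pow2 _ Hn). apply sqrt_le_1_alt. auto.
Qed.

Lemma dist_le_sum k x y : Defs.dist k x y <= sumR k (fun i => Rabs (x i - y i)).
Proof. unfold dist. apply (sqrt_sum_le (seq 0 k) (fun i => x i - y i)). Qed.

Lemma coord_le_dist k x y i : (i < k)%nat -> Rabs (x i - y i) <= Defs.dist k x y.
Proof.
  intros Hi. unfold dist. rewrite <- (sqrt_pow2 (Rabs (x i - y i))) by apply Rabs_pos.
  apply sqrt_le_1_alt. rewrite pow2_abs.
  apply (lsum_elem (seq 0 k) (fun i => (x i - y i)^2)). intros; apply pow2_ge_0.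
  apply in_seq0; auto.
Qed.

Lemma dist_le_box k x y c : (forall i, (i < k)%nat -> Rabs (x i - y i) <= c) -> Defs.dist k x y <= INR k * c.
Proof. intros H. eapply Rle_trans. apply dist_le_sum. rewrite sumR_l.
  rewrite <- (length_seq k 0) at 2. apply lsum_const_le. intros i Hi; apply H; apply in_seq0; auto. Qed.

Section HB.
Variables (k : nat) (M : R) (Sx : vec -> Prop) (I : Type) (O : I -> vec -> Prop).
Hypothesis HM : 0 <= M.
Hypothesis Hbd : forall x, Sx x -> forall i, (i < k)%nat -> -M <= x i <= M.
Hypothesis Hop : forall i, is_open k (O i).
Hypothesis Hcov : forall x, closure k Sx x -> exists i, O i x.

Definition inB (a b x : vec) := forall i, (i < k)%nat -> a i <= x i <= b i.
Definition Pbox (a b : vec) := ~ exists l, forall x, Sx x -> inB a b x -> exists i, In i l /\ O i x.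
Definition upd (f : vec) (j : nat) (v : R) : vec := fun i => if Nat.eq_dec i j then v else f i.

Lemma halve1 a b j : Pbox a b -> (j < k)%nat ->
  Pbox a (upd b j ((a j + b j)/2)) \/ Pbox (upd a j ((a j + b j)/2)) b.
Proof.
  intros H Hj. set (m := (a j + b j)/2).
  destruct (classic (Pbox a (upd b j m))) as [H1|H1]; [left; auto|right].
  intros [l2 H2]. apply H. unfold Pbox in H1. apply NNPP in H1. destruct H1 as [l1 H1].
  exists (l1 ++ l2). intros x Sx0 Bx.
  destruct (Rle_dec (x j) m) as [Hl|Hl].
  - destruct (H1 x Sx0) as [i [Hi Oi]].
    { intros i Hi. unfold upd. destruct (Nat.eq_dec i j); subst; auto.
      specialize (Bx j Hi). lra. }
    exists i; split; auto. apply in_or_app; auto.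
  - destruct (H2 x Sx0) as [i [Hi Oi]].
    { intros i Hi. unfold upd. destruct (Nat.eq_dec i j); subst; auto.
      specialize (Bx j Hi). lra. }
    exists i; split; auto. apply in_or_app; auto.
Qed.

Lemma halveM m : (m <= k)%nat -> forall a b, Pbox a b -> (forall i, (i < k)%nat -> a i <= b i) ->
  exists a' b', Pbox a' b' /\
    (forall i, (i < m)%nat -> a i <= a' i /\ b' i <= b i /\ b' i - a' i = (b i - a i)/2) /\
    (forall i, (m <= i)%nat -> a' i = a i /\ b' i = b i).
Proof.
  induction m; intros Hm a b HP Hab.
  - exists a, b. split; auto. split; intros; [lia|auto].
  - destruct (IHm ltac:(lia) a b HP Hab) as [a1 [b1 [HP1 [H1 H2]]]].
    destruct (H2 m (le_n m)) as [Ea Eb].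
    assert (Habm : a m <= b m) by (apply Hab; lia).
    destruct (halve1 a1 b1 m HP1 ltac:(lia)) as [HL|HR].
    + eexists; eexists; split; [exact HL|]. split.
      * intros i Hi. unfold upd. destruct (Nat.eq_dec i m).
        -- subst. rewrite Ea, Eb. lra.
        -- apply H1; lia.
      * intros i Hi. unfold upd. destruct (Nat.eq_dec i m); [lia|]. apply H2; lia.
    + eexists; eexists; split; [exact HR|]. split.
      * intros i Hi. unfold upd. destruct (Nat.eq_dec i m).
        -- subst. rewrite Ea, Eb. lra.
        -- apply H1; lia.
      * intros i Hi. unfold upd. destruct (Nat.eq_dec i m); [lia|]. apply H2; lia.
Qed.

Definition rel (ab ab' : vec * vec) :=
  Pbox (fst ab') (snd ab') /\
  (forall i, (i < k)%nat -> fst ab i <= fst ab' i /\ snd ab' i <= snd ab i /\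
        snd ab' i - fst ab' i = (snd ab i - fst ab i)/2) /\
  (forall i, (k <= i)%nat -> fst ab' i = fst ab i /\ snd ab' i = snd ab i).

Definition boxa0 : vec := fun _ => -M.
Definition boxb0 : vec := fun _ => M.
Definition inh : inhabited (vec * vec) := inhabits (boxa0, boxb0).
Definition Fstep (ab : vec * vec) : vec * vec := epsilon inh (rel ab).

Fixpoint boxes (t : nat) : vec * vec :=
  match t with 0%nat => (boxa0, boxb0) | S t => Fstep (boxes t) end.

Definition A t := fst (boxes t).
Definition B t := snd (boxes t).

Lemma boxes_inv t : Pbox boxa0 boxb0 ->
  Pbox (A t) (B t) /\ (forall i, (i < k)%nat -> B t i - A t i = 2 * M / 2 ^ t) /\
  (forall i, (k <= i)%nat -> A t i = -M /\ B t i = M).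
Proof.
  intros P0. induction t.
  - unfold A, B; simpl. split; auto. split; intros; unfold boxa0, boxb0; [lra|lra].
  - destruct IHt as [HP [Hw Hk]].
    assert (Hr : rel (boxes t) (boxes (S t))).
    { simpl. unfold Fstep. apply epsilon_spec.
      destruct (halveM k (le_n k) (A t) (B t) HP) as [a' [b' [H1 [H2 H3]]]].
      { intros i Hi. pose proof (Hw i Hi). assert (0 < 2^t) by (apply pow_lt; lra).
        assert (0 <= 2*M/2^t) by (unfold Rdiv; apply Rmult_le_pos; [lra| left; apply Rinv_0_lt_compat; auto]). lra. }
      exists (a', b'). split; auto. }
    destruct Hr as [HP' [Hw' Hk']]. fold (A (S t)) (B (S t)) in HP', Hw', Hk'.
    fold (A t) (B t) in Hw', Hk'.
    split; auto. split.
    + intros i Hi. destruct (Hw' i Hi) as [_ [_ E]]. rewrite E, Hw by auto.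
      assert (0 < 2^t) by (apply pow_lt; lra). simpl. field. lra.
    + intros i Hi. destruct (Hk' i Hi) as [E1 E2]. rewrite E1, E2. apply Hk; auto.
Qed.

Lemma boxes_rel t : Pbox boxa0 boxb0 -> rel (boxes t) (boxes (S t)).
Proof.
  intros P0. destruct (boxes_inv t P0) as [HP [Hw Hk]].
  simpl. unfold Fstep. apply epsilon_spec.
  destruct (halveM k (le_n k) (A t) (B t) HP) as [a' [b' [H1 [H2 H3]]]].
  { intros i Hi. pose proof (Hw i Hi). assert (0 < 2^t) by (apply pow_lt; lra).
    assert (0 <= 2*M/2^t) by (unfold Rdiv; apply Rmult_le_pos; [lra| left; apply Rinv_0_lt_compat; auto]). lra. }
  exists (a', b'). split; auto.
Qed.

Lemma A_le_B t i : Pbox boxa0 boxb0 -> A t i <= B t i.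
Proof.
  intros P0. destruct (boxes_inv t P0) as [HP [Hw Hk]].
  destruct (Nat.lt_ge_cases i k) as [Hi|Hi].
  - pose proof (Hw i Hi). assert (0 < 2^t) by (apply pow_lt; lra).
    assert (0 <= 2*M/2^t) by (unfold Rdiv; apply Rmult_le_pos; [lra| left; apply Rinv_0_lt_compat; auto]). lra.
  - destruct (Hk i Hi). lra.
Qed.

Lemma step_mono t i : Pbox boxa0 boxb0 -> A t i <= A (S t) i /\ B (S t) i <= B t i.
Proof.
  intros P0. destruct (boxes_rel t P0) as [_ [H1 H2]].
  destruct (Nat.lt_ge_cases i k) as [Hi|Hi].
  - destruct (H1 i Hi) as [X [Y _]]. unfold A, B. auto.
  - destruct (H2 i Hi) as [X Y]. unfold A, B. rewrite X, Y. lra.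
Qed.

Lemma mono t s i : Pbox boxa0 boxb0 -> (t <= s)%nat -> A t i <= A s i /\ B s i <= B t i.
Proof.
  intros P0 H. induction H. lra.
  destruct (step_mono m i P0). lra.
Qed.

Lemma A_le_B' s t i : Pbox boxa0 boxb0 -> A s i <= B t i.
Proof.
  intros P0. destruct (mono s (max s t) i P0 ltac:(lia)).
  destruct (mono t (max s t) i P0 ltac:(lia)).
  pose proof (A_le_B (max s t) i P0). lra.
Qed.

Definition pt : vec := fun i => epsilon (inhabits 0) (is_lub (fun r => exists t, r = A t i)).

Lemma pt_in t i : Pbox boxa0 boxb0 -> A t i <= pt i <= B t i.
Proof.
  intros P0.
  assert (Hl : is_lub (fun r => exists t, r = A t i) (pt i)).
  { unfold pt. apply epsilon_spec.
    destruct (completeness (fun r => exists t, r = A t i)) as [m Hm].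
    - exists (B 0%nat i). intros r [s ->]. apply A_le_B'; auto.
    - exists (A 0%nat i). exists 0%nat. auto.
    - exists m; auto. }
  destruct Hl as [Hub Hlub]. split.
  - apply Hub. exists t; auto.
  - apply Hlub. intros r [s ->]. apply A_le_B'; auto.
Qed.

Lemma box_nonempty t : Pbox boxa0 boxb0 -> exists x, Sx x /\ inB (A t) (B t) x.
Proof.
  intros P0. destruct (boxes_inv t P0) as [HP _].
  apply NNPP. intro Hn. apply HP. exists nil. intros x Sx0 Bx. exfalso. apply Hn. exists x; auto.
Qed.

Lemma small_t r : 0 < r -> exists t, INR k * (2 * M / 2 ^ t) < r.
Proof.
  intros Hr. destruct (nat_unb (INR k * 2 * M / r)) as [N HN].
  exists N.
  assert (HN2 : INR N <= 2 ^ N).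
  { clear HN. induction N. simpl; lra. rewrite S_INR. simpl.
    assert (1 <= 2 ^ N) by (apply pow_R1_Rle; lra). lra. }
  assert (0 < 2 ^ N) by (apply pow_lt; lra).
  pose proof (pos_INR k).
  assert (INR k * 2 * M / r * r = INR k * 2 * M) by (field; lra).
  assert (INR k * 2 * M < INR N * r).
  { rewrite <- H1. apply Rmult_lt_compat_r; auto. }
  unfold Rdiv. rewrite <- Rmult_assoc, <- Rmult_assoc.
  apply Rmult_lt_reg_r with (2 ^ N); auto.
  rewrite Rmult_assoc, Rinv_l by lra. nra.
Qed.

Lemma HB_main : (forall x, Sx x -> forall i, (i < k)%nat -> -M <= x i <= M) ->
  exists l, forall x, Sx x -> exists i, In i l /\ O i x.
Proof.
  intros _. apply NNPP. intro Hn.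
  assert (P0 : Pbox boxa0 boxb0).
  { intros [l Hl]. apply Hn. exists l. intros x Sx0. apply Hl; auto. intros i Hi. apply Hbd; auto. }
  assert (Hclose : forall t x, inB (A t) (B t) x -> Defs.dist k pt x <= INR k * (2 * M / 2 ^ t)).
  { intros t x Bx. apply dist_le_box. intros i Hi.
    destruct (boxes_inv t P0) as [_ [Hw _]]. specialize (Hw i Hi).
    pose proof (pt_in t i P0). specialize (Bx i Hi). apply Rabs_le. lra. }
  assert (Hcl : closure k Sx pt).
  { intros eps He. destruct (small_t eps He) as [t Ht].
    destruct (box_nonempty t P0) as [x [Sx0 Bx]]. exists x. split; auto.
    eapply Rle_lt_trans; [apply Hclose; eauto|auto]. }
  destruct (Hcov pt Hcl) as [i0 Oi0].
  destruct (Hop i0 pt Oi0) as [r [Hr Hball]].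
  destruct (small_t r Hr) as [t Ht].
  destruct (boxes_inv t P0) as [HP _]. apply HP.
  exists (i0 :: nil). intros x Sx0 Bx. exists i0. split; [left; auto|].
  apply Hball. eapply Rle_lt_trans; [apply Hclose; eauto|auto].
Qed.
End HB.

Lemma HeineBorel (k : nat) (M : R) (Sx : vec -> Prop) (I : Type) (O : I -> vec -> Prop) :
  0 <= M -> (forall x, Sx x -> forall i, (i < k)%nat -> -M <= x i <= M) ->
  (forall i, is_open k (O i)) -> (forall x, closure k Sx x -> exists i, O i x) ->
  exists l, forall x, Sx x -> exists i, In i l /\ O i x.
Proof. intros. eapply HB_main; eauto. Qed.


Lemma fold_scal {A} (l : list A) (F G : A -> R) c :
  (forall a, In a l -> F a = c * G a) ->
  fold_right Rplus 0 (map F l) = c * fold_right Rplus 0 (map G l).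
Proof. induction l; simpl; intros H. ring. rewrite H by auto. rewrite IHl by auto. ring. Qed.

Lemma fold_max_le (l : list (list nat)) (F : list nat -> nat) a : In a l -> (F a <= fold_right Nat.max 0 (map F l))%nat.
Proof. induction l; simpl; intros H. contradiction. destruct H as [<-|H]. lia. specialize (IHl H). lia. Qed.

Lemma pdeg_bound {n} (f : mpoly n) a : In a (msupp f) -> mcoef f a <> 0 -> (mdeg_mono n a <= pdeg f)%nat.
Proof.
  intros Ha Hc. unfold pdeg.
  pose proof (fold_max_le (msupp f) (fun a => if Req_EM_T (mcoef f a) 0 then 0%nat else mdeg_mono n a) a Ha).
  simpl in H. destruct (Req_EM_T (mcoef f a) 0); [contradiction|auto].
Qed.

Lemma mono_neg n a y : mono_eval n a (fun i => - y i) = (-1) ^ (mdeg_mono n a) * mono_eval n a y.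
Proof.
  unfold mono_eval, mdeg_mono, prodR, sumN. generalize (seq 0 n). intros l.
  induction l; simpl. ring. rewrite IHl, pow_add.
  replace (- y a0) with ((-1) * y a0) by ring. rewrite Rpow_mult_distr. ring.
Qed.

Lemma mono_div n a y t : t <> 0 -> mono_eval n a (fun i => y i / t) = mono_eval n a y * (/ t) ^ (mdeg_mono n a).
Proof.
  intros Ht. unfold mono_eval, mdeg_mono, prodR, sumN. generalize (seq 0 n). intros l.
  induction l; simpl. ring. rewrite IHl, pow_add.
  unfold Rdiv. rewrite Rpow_mult_distr. ring.
Qed.

Lemma hom_neg {n} (f : mpoly n) xt : xt 0%nat = 0 ->
  hom_eval f (fun i => - xt i) = (-1) ^ (pdeg f) * hom_eval f xt.
Proof.
  intros H0. unfold hom_eval. apply fold_scal. intros a Ha.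
  rewrite H0. replace (- 0) with 0 by ring.
  rewrite mono_neg.
  destruct (Req_EM_T (mcoef f a) 0) as [Hc|Hc]. rewrite Hc; ring.
  pose proof (pdeg_bound f a Ha Hc).
  destruct (pdeg f - mdeg_mono n a)%nat eqn:E.
  - assert (mdeg_mono n a = pdeg f) by lia. rewrite H1. simpl. ring.
  - simpl. ring.
Qed.

Lemma hom_scale {n} (f : mpoly n) xt : 0 < xt 0%nat ->
  hom_eval f xt = xt 0%nat ^ pdeg f * peval f (fun j => xt (S j) / xt 0%nat).
Proof.
  intros H0. unfold hom_eval, peval. apply fold_scal. intros a Ha.
  rewrite mono_div by lra.
  destruct (Req_EM_T (mcoef f a) 0) as [Hc|Hc]. rewrite Hc; ring.
  pose proof (pdeg_bound f a Ha Hc).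
  replace (pdeg f) with ((pdeg f - mdeg_mono n a) + mdeg_mono n a)%nat at 2 by lia.
  rewrite pow_add. 
  assert (xt 0%nat ^ mdeg_mono n a * (/ xt 0%nat) ^ mdeg_mono n a = 1).
  { rewrite <- Rpow_mult_distr, Rinv_r by lra. apply pow1. }
  transitivity (mcoef f a * xt 0%nat ^ (pdeg f - mdeg_mono n a) * mono_eval n a (fun i => xt (S i)) *
     (xt 0%nat ^ mdeg_mono n a * (/ xt 0%nat) ^ mdeg_mono n a)).
  rewrite H1; ring. ring.
Qed.

Lemma Rabs_le_1 z c : Rabs z <= c -> -c <= z <= c.
Proof. unfold Rabs; destruct (Rcase_abs z); lra. Qed.

Lemma quot_est P0 P Q0 Q d Bd : 0 < P0 -> Rabs P <= Bd -> Rabs (P0 - Q0) <= d -> Rabs (P - Q) <= d -> d <= P0 / 2 ->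
  Rabs (P / P0 - Q / Q0) <= d * (2 * (P0 + Bd) / P0 ^ 2).
Proof.
  intros H0 HB H1 H2 H3.
  apply Rabs_le_1 in H1.
  assert (HQ : P0 / 2 <= Q0) by lra.
  set (X := P / P0 - Q / Q0).
  assert (EX : X * (P0 * Q0) = P * (Q0 - P0) + (P - Q) * P0) by (unfold X; field; lra).
  assert (Hd : 0 <= d) by (eapply Rle_trans; [apply Rabs_pos|exact H2]).
  assert (E1 : Rabs X * (P0 * Q0) <= d * (Bd + P0)).
  { replace (Rabs X * (P0 * Q0)) with (Rabs (X * (P0 * Q0))).
    2:{ rewrite Rabs_mult, (Rabs_pos_eq (P0 * Q0)); auto. apply Rmult_le_pos; lra. }
    rewrite EX. eapply Rle_trans; [apply Rabs_triang|].
    rewrite !Rabs_mult. rewrite (Rabs_pos_eq P0) by lra.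
    assert (Rabs (Q0 - P0) <= d) by (apply Rabs_le; lra).
    pose proof (Rabs_pos P). pose proof (Rabs_pos (Q0 - P0)). pose proof (Rabs_pos (P - Q)).
    assert (Rabs P * Rabs (Q0 - P0) <= Bd * d) by (apply Rmult_le_compat; auto).
    assert (Rabs (P - Q) * P0 <= d * P0) by (apply Rmult_le_compat_r; lra).
    lra. }
  pose proof (Rabs_pos X).
  assert (E2 : Rabs X * (P0 ^ 2 / 2) <= d * (Bd + P0)).
  { eapply Rle_trans; [|exact E1]. apply Rmult_le_compat_l; auto. simpl. nra. }
  assert (0 < P0 ^ 2 / 2) by (simpl; nra).
  apply Rmult_le_reg_r with (P0 ^ 2 / 2); auto.
  replace (d * (2 * (P0 + Bd) / P0 ^ 2) * (P0 ^ 2 / 2)) with (d * (Bd + P0)) by (field; lra). auto.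
Qed.

Section Main.
Variables (n m1 m2 : nat) (h g : nat -> mpoly n).

Definition Nn (x : vec) := 1 + sumR n (fun j => Rabs (x j)).
Definition phi (x : vec) : vec := fun i => match i with 0%nat => / Nn x | S j => x j / Nn x end.
Definition Lk (xt : vec) := sumR (S n) (fun i => Rabs (xt i)).

Lemma Nn_ge1 x : 1 <= Nn x.
Proof. unfold Nn. assert (0 <= sumR n (fun j => Rabs (x j))) by (apply lsum_nonneg; intros; apply Rabs_pos). lra. Qed.

Lemma phi_back x : (fun j => phi x (S j) / phi x 0%nat) = x.
Proof. apply functional_extensionality. intros j. simpl. pose proof (Nn_ge1 x). field. lra. Qed.

Lemma phi_Uo x : Uset n m1 m2 h g x -> Uo n m1 m2 h g (phi x).
Proof.
  intros [Hh Hg]. pose proof (Nn_ge1 x).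
  assert (H0 : 0 < phi x 0%nat) by (simpl; apply Rinv_0_lt_compat; lra).
  split; [|split; auto].
  - intros i Hi. rewrite hom_scale, phi_back, Hh by auto. ring.
  - intros j Hj. rewrite hom_scale, phi_back by auto. apply Rmult_le_pos; auto.
    apply pow_le; lra.
Qed.

Lemma Lk_phi x : Lk (phi x) = 1.
Proof.
  unfold Lk. rewrite sumR_S. simpl. pose proof (Nn_ge1 x).
  rewrite Rabs_pos_eq by (left; apply Rinv_0_lt_compat; lra).
  assert (E : sumR n (fun j => Rabs (x j / Nn x)) = / Nn x * sumR n (fun j => Rabs (x j))).
  { rewrite !sumR_l. rewrite <- lsum_scal. unfold lsum. f_equal. apply map_ext. intros j.
    unfold Rdiv. rewrite Rabs_mult, Rabs_inv, (Rabs_pos_eq (Nn x)) by lra. ring. }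
  rewrite E. unfold Nn in *. field. lra.
Qed.

Lemma phi_bound x i : (i < S n)%nat -> -1 <= phi x i <= 1.
Proof.
  intros Hi. apply Rabs_le_1. pose proof (Nn_ge1 x). destruct i; simpl.
  - rewrite Rabs_pos_eq by (left; apply Rinv_0_lt_compat; lra).
    apply Rmult_le_reg_r with (Nn x). lra. rewrite Rinv_l by lra. lra.
  - unfold Rdiv. rewrite Rabs_mult, Rabs_inv, (Rabs_pos_eq (Nn x)) by lra.
    assert (Rabs (x i) <= Nn x).
    { unfold Nn. rewrite sumR_l. pose proof (lsum_elem (seq 0 n) (fun j => Rabs (x j)) i) as HH.
      assert (Rabs (x i) <= lsum (seq 0 n) (fun j => Rabs (x j))).
      { apply HH. intros; apply Rabs_pos. apply in_seq0. lia. }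
      lra. }
    apply Rmult_le_reg_r with (Nn x). lra. rewrite Rmult_assoc, Rinv_l by lra. lra.
Qed.

Definition Ob {I} (O : I -> vec -> Prop) (i : I) (xt : vec) :=
  0 < xt 0%nat /\ O i (fun j => xt (S j) / xt 0%nat).

Lemma Ob_open {I} (O : I -> vec -> Prop) i : is_open n (O i) -> is_open (S n) (Ob O i).
Proof.
  intros Hop p [Hp0 HOp]. destruct (Hop _ HOp) as [eps [He Hball]].
  set (Bd := Lk p).
  assert (HBd : forall j, (j < n)%nat -> Rabs (p (S j)) <= Bd).
  { intros j Hj. unfold Bd, Lk. rewrite sumR_l. apply (lsum_elem (seq 0 (S n)) (fun i => Rabs (p i)) (S j)).
    intros; apply Rabs_pos. apply in_seq0. lia. }
  assert (HB0 : 0 <= Bd) by (apply lsum_nonneg; intros; apply Rabs_pos).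
  set (K := INR n + 1). assert (HK : 0 < K) by (unfold K; pose proof (pos_INR n); lra).
  set (C := 2 * (p 0%nat + Bd) / p 0%nat ^ 2).
  assert (HC : 0 < C) by (unfold C; apply Rdiv_lt_0_compat; [lra| apply pow_lt; lra]).
  exists (Rmin (p 0%nat / 2) (eps / (2 * K * C))). split.
  { apply Rmin_pos. lra. apply Rdiv_lt_0_compat; auto. nra. }
  intros q Hq. set (d := Defs.dist (S n) p q) in *.
  assert (Hd1 : d < p 0%nat / 2) by (eapply Rlt_le_trans; [exact Hq| apply Rmin_l]).
  assert (Hd2 : d < eps / (2 * K * C)) by (eapply Rlt_le_trans; [exact Hq| apply Rmin_r]).
  assert (Hc : forall i, (i < S n)%nat -> Rabs (p i - q i) <= d) by (intros; apply coord_le_dist; auto).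
  assert (Hq0 : 0 < q 0%nat).
  { pose proof (Rabs_le_1 _ _ (Hc 0%nat ltac:(lia))). lra. }
  split; auto. apply Hball.
  assert (HdC : 0 <= d * C) by (apply Rmult_le_pos; [unfold d, Defs.dist; apply sqrt_pos| lra]).
  eapply Rle_lt_trans. apply dist_le_box with (c := d * C).
  - intros j Hj. apply quot_est; auto. apply Hc; lia. apply Hc; lia. lra.
  - assert (d * C < eps / (2 * K)).
    { replace (eps / (2 * K)) with (eps / (2 * K * C) * C) by (field; lra).
      apply Rmult_lt_compat_r; auto. }
    assert (INR n * (d * C) <= K * (d * C)) by (apply Rmult_le_compat_r; unfold K; lra).
    assert (K * (eps / (2 * K)) = eps / 2) by (field; lra).
    assert (K * (d * C) < K * (eps / (2 * K))) by (apply Rmult_lt_compat_l; auto).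
    lra.
Qed.

End Main.

Theorem mainTheorem14 (n m1 m2 : nat) (h g : nat -> mpoly n) :
  (forall j, (j < m2)%nat -> Nat.Even (pdeg (g j))) ->
  ~ is_compact n (Uset n m1 m2 h g) ->
  is_closed (S n) (conv (S n) (closure (S n) (Uo n m1 m2 h g))) ->
  pointed (S n) (conv (S n) (closure (S n) (Uo n m1 m2 h g))) ->
  ~ closed_at_inf n m1 m2 h g.
Proof.
  intros HE HNC _ HPt CI.
  assert (Hconv : forall K (x : vec), K x -> conv (S n) K x).
  { intros K x Kx. exists ((1, x) :: nil). simpl. split.
    - constructor; [simpl; split; [lra|auto]|constructor].
    - split; [ring|]. intros; ring. }
  assert (Z : forall xt, closure (S n) (Uo n m1 m2 h g) xt -> xt 0%nat = 0 ->
             forall i, (i < S n)%nat -> xt i = 0).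
  { intros xt Hxt H0. apply HPt; apply Hconv; auto.
    apply CI. apply CI in Hxt. destruct Hxt as [Hh [Hg Hx0]].
    split; [|split].
    - intros i Hi. rewrite hom_neg, Hh by auto. ring.
    - intros j Hj. rewrite hom_neg by auto. destruct (HE j Hj) as [m Hm].
      rewrite Hm, pow_1_even. rewrite Rmult_1_l. auto.
    - lra. }
  apply HNC. intros I O Hop Hcov.
  set (T := fun xt => exists x, Uset n m1 m2 h g x /\ xt = phi n x).
  destruct (HeineBorel (S n) 1 T I (Ob O)) as [l Hl].
  - lra.
  - intros xt [x [_ ->]] i Hi. apply phi_bound; auto.
  - intros i. apply Ob_open; auto.
  - intros p Hp.
    assert (HL : 1 / 2 < Lk n p).
    { set (eps := 1 / (2 * (INR (S n) + 1))).
      assert (He : 0 < eps) by (unfold eps; pose proof (pos_INR (S n)); apply Rdiv_lt_0_compat; lra).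
      destruct (Hp eps He) as [q [[x [Ux ->]] Hd]].
      pose proof (Lk_phi n x) as E1.
      assert (Lk n (phi n x) <= Lk n p + sumR (S n) (fun i => Rabs (p i - phi n x i))).
      { unfold Lk. rewrite !sumR_l, <- lsum_plus. apply lsum_le. intros i _.
        pose proof (Rabs_triang (p i) (phi n x i - p i)).
        replace (p i + (phi n x i - p i)) with (phi n x i) in H by ring.
        rewrite Rabs_minus_sym in H. lra. }
      assert (sumR (S n) (fun i => Rabs (p i - phi n x i)) <= INR (S n) * eps).
      { rewrite sumR_l. rewrite <- (length_seq (S n) 0) at 2. apply lsum_const_le.
        intros i Hi. apply in_seq0 in Hi. eapply Rle_trans. apply coord_le_dist; eauto. lra. }
      assert (INR (S n) * eps < 1 / 2).
      { unfold eps. pose proof (pos_INR (S n)).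
        apply Rmult_lt_reg_r with (2 * (INR (S n) + 1)). lra.
        replace (INR (S n) * (1 / (2 * (INR (S n) + 1))) * (2 * (INR (S n) + 1))) with (INR (S n)) by (field; lra).
        lra. }
      lra. }
    assert (HpU : closure (S n) (Uo n m1 m2 h g) p).
    { intros eps He. destruct (Hp eps He) as [q [[x [Ux ->]] Hd]]. exists (phi n x). split; auto.
      apply phi_Uo; auto. }
    pose proof HpU as HpC. apply CI in HpC. destruct HpC as [Hh [Hg Hp0]].
    assert (Hp0' : 0 < p 0%nat).
    { destruct Hp0 as [?|E]; auto. exfalso.
      pose proof (Z p HpU (eq_sym E)).
      assert (Lk n p <= INR (S n) * 0).
      { unfold Lk. rewrite sumR_l. rewrite <- (length_seq (S n) 0) at 2. apply lsum_const_le.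
        intros i Hi. apply in_seq0 in Hi. rewrite H; auto. rewrite Rabs_R0. lra. }
      lra. }
    assert (Ux : Uset n m1 m2 h g (fun j => p (S j) / p 0%nat)).
    { assert (forall d, 0 < p 0%nat ^ d) by (intros; apply pow_lt; auto).
      split.
      - intros i Hi. specialize (Hh i Hi). rewrite hom_scale in Hh by auto.
        apply Rmult_integral in Hh. destruct Hh as [E|E]; auto.
        specialize (H (pdeg (h i))). lra.
      - intros j Hj. specialize (Hg j Hj). rewrite hom_scale in Hg by auto.
        specialize (H (pdeg (g j))).
        apply Rmult_le_reg_l with (p 0%nat ^ pdeg (g j)); auto. lra. }
    destruct (Hcov _ Ux) as [i Oi]. exists i. split; auto.
  - exists l. intros x Ux. destruct (Hl (phi n x)) as [i [Hi [_ Oi]]].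
    + exists x; auto.
    + exists i. split; auto. rewrite phi_back in Oi. auto.
Qed.
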